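(* Let $n\geq 2$, $w=w_1\cdots w_n\in\mathfrak{S}_n$, $i\in\{1,\dots,n\}$ and $1\leq k\leq n-1$. Then $w_i$ is a $k$-peak of $w$ if and only if both of the following hold: (1) if there is $s>i$ with $w_s>w_i$, then there is $j$ with $i<j\leq s$ and $w_i-w_j\geq k$; (2) if there is $s<i$ with $w_s>w_i$, then there is $j$ with $s\leq j<i$ and $w_i-w_j\geq k$.
   Context: $\mathfrak{S}_n$ is the set of permutations $w=w_1\cdots w_n$ of $\{1,\dots,n\}$. A section of $w$ is a consecutive block $w_s\cdots w_t$ ($s\le t$). A section $w_s\cdots w_t$ is a $k$-up if $s<t$ and $w_t-w_s\geq k$, and a $k$-down if $s<t$ and $w_s-w_t\geq k$; a $k$-up/$k$-down ''in'' $w_a\cdots w_b$ means one $w_s\cdots w_t$ with $a\le s<t\le b$. A section $w_i\cdots w_j$ ($i<j$) is $k$-ascending if $w_i=\min\{w_i,\dots,w_j\}$, $w_j=\max\{w_i,\dots,w_j\}$, $w_j-w_i\geq k$, and there is no $k$-down in it; it is $k$-descending if $w_i=\max$, $w_j=\min$ of $\{w_i,\dots,w_j\}$, $w_i-w_j\geq k$, and there is no $k$-up in it. Such a section is maximal if not contained in another section of the same type. An entry $w_i$ is a $k$-peak of $w$ if it is the last entry of a maximal $k$-ascending section or the first entry of a maximal $k$-descending section. *)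

(* Defs.v *)
(* Permutations of {1..n} are modelled as 'S_n = {perm 'I_n}:
   positions and values are 0-based (w_{i+1} = (w i) + 1); all statements only
   involve order comparisons and differences, which are shift invariant. *)
From mathcomp Require Import all_boot all_fingroup.
Set Implicit Arguments. Unset Strict Implicit. Unset Printing Implicit Defensive.

Section KPeak.
Variable n : nat.
Implicit Types (w : 'S_n) (s t i j : 'I_n) (k : nat).

(* w_t - w_s >= k, i.e. w_s + k <= w_t (avoids truncated subtraction). *)
Definition kup w k s t : Prop := (s < t)%N /\ (w s + k <= w t)%N.
Definition kdown w k s t : Prop := (s < t)%N /\ (w t + k <= w s)%N.

Definition kascending w k i j : Prop :=
  [/\ (i < j)%N,
      (forall m : 'I_n, (i <= m <= j)%N -> (w i <= w m)%N /\ (w m <= w j)%N),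
      (w i + k <= w j)%N &
      ~ (exists s t : 'I_n, (i <= s)%N /\ (t <= j)%N /\ kdown w k s t)].

Definition kdescending w k i j : Prop :=
  [/\ (i < j)%N,
      (forall m : 'I_n, (i <= m <= j)%N -> (w j <= w m)%N /\ (w m <= w i)%N),
      (w j + k <= w i)%N &
      ~ (exists s t : 'I_n, (i <= s)%N /\ (t <= j)%N /\ kup w k s t)].

Definition max_kascending w k i j : Prop :=
  kascending w k i j /\
  ~ (exists i' j' : 'I_n, (i' <= i)%N /\ (j <= j')%N /\ (i', j') <> (i, j)
                          /\ kascending w k i' j').
Definition max_kdescending w k i j : Prop :=
  kdescending w k i j /\
  ~ (exists i' j' : 'I_n, (i' <= i)%N /\ (j <= j')%N /\ (i', j') <> (i, j)
                          /\ kdescending w k i' j').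

Definition kpeak w k i : Prop :=
  (exists j, max_kascending w k j i) \/ (exists j, max_kdescending w k i j).
End KPeak.

(* Main.v *)
Require Import Defs.
From mathcomp Require Import all_boot all_fingroup.
From mathcomp Require Import zify.
From Stdlib Require Import Classical.
Set Implicit Arguments.

Section Aux.
Variable n : nat.
Variable w : 'S_n.
Variable k : nat.
Hypothesis hk1 : (1 <= k)%N.

Lemma wneq (a b : 'I_n) : a != b -> (w a : nat) != w b.
Proof.
apply: contra => /eqP h; apply/eqP; apply: (@perm_inj _ w); exact: val_inj.
Qed.

Lemma wlt (a b : 'I_n) : a != b -> (w a : nat) <= w b -> (w a : nat) < w b.
Proof. move=> /wneq h1 h2; lia. Qed.

Lemma ordeq (a b : 'I_n) : (a : nat) = b -> a = b.
Proof. exact: val_inj. Qed.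

Lemma asc_c1 (j i : 'I_n) : max_kascending w k j i ->
  forall s : 'I_n, (i < s)%N -> (w i < w s)%N ->
      exists j' : 'I_n, (i < j' <= s)%N /\ (w j' + k <= w i)%N.
Proof.
move=> [[hji hmm hk hnd] hmax] s his hws.
case: (boolP [exists j' : 'I_n, (i < j' <= s) && (w j' + k <= w i)]) =>
  [/existsP [j' /andP[h1 h2]]|hne]; first by exists j'.
exfalso; apply: hmax.
have hne' : forall m : 'I_n, (i < m <= s)%N -> (w i < w m + k)%N.
  by move=> m hm; move/existsPn: hne => /(_ m); rewrite hm /= -ltnNge.
pose P := fun p : 'I_n => (i < p) && (w i < w p).
have Ps : P s by rewrite /P his hws.
case: (arg_minnP (fun p : 'I_n => nat_of_ord p) Ps) => s' /andP[his' hws'] hmin.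
have hs's : (s' <= s)%N by apply: hmin.
have hbet : forall m : 'I_n, (i < m < s')%N -> (w m < w i)%N.
  move=> m /andP[h1 h2]; apply: wlt.
    by apply/eqP => e; rewrite e ltnn in h1.
  rewrite leqNgt; apply/negP => h.
  have := hmin m; rewrite /P h1 h /= => /(_ isT); lia.
exists j, s'; split => //; split; first lia; split.
  by case=> e; move: his'; rewrite -e ltnn.
split.
- lia.
- move=> m /andP[h1 h2]; case: (leqP m i) => hmi.
    by have := hmm m; rewrite h1 hmi => /(_ isT) [a b]; split; lia.
  case: (ltnP m s') => hms.
    have := hbet m; rewrite hmi hms => /(_ isT) h.
    have := hne' m; rewrite hmi /= => /(_ ltac:(lia)) h'.
    split; lia.
  have e : m = s' by apply: ordeq; lia.
  subst m. have := hmm i.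
  move=> /(_ ltac:(lia)) [a b]; split; lia.
- lia.
- move=> [a [b [ha [hb [hab hd]]]]].
  case: (leqP b i) => hbi.
    by apply: hnd; exists a, b; do !split; lia.
  have := hne' b; rewrite hbi /= => /(_ ltac:(lia)) hb'.
  case: (leqP a i) => hai.
    have := hmm a; rewrite ha hai => /(_ isT) [_ ?]; lia.
  have := hbet a; rewrite hai /= => /(_ ltac:(lia)) ?; lia.
Qed.

Lemma asc_c2 (j i : 'I_n) : max_kascending w k j i ->
  forall s : 'I_n, (s < i)%N -> (w i < w s)%N ->
      exists j' : 'I_n, (s <= j' < i)%N /\ (w j' + k <= w i)%N.
Proof.
move=> [[hji hmm hk hnd] hmax] s hsi hws.
exists j; split => //.
case: (ltnP s j) => hsj; first lia.
have := hmm s; rewrite hsj /= => /(_ ltac:(lia)) [_ ?]; lia.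
Qed.

Lemma desc_c1 (i j : 'I_n) : max_kdescending w k i j ->
  forall s : 'I_n, (i < s)%N -> (w i < w s)%N ->
      exists j' : 'I_n, (i < j' <= s)%N /\ (w j' + k <= w i)%N.
Proof.
move=> [[hij hmm hk hnu] hmax] s his hws.
exists j; split => //.
case: (ltnP j s) => hjs; first lia.
have := hmm s; rewrite hjs andbT => /(_ ltac:(lia)) [_ ?]; lia.
Qed.

Lemma desc_c2 (i j : 'I_n) : max_kdescending w k i j ->
  forall s : 'I_n, (s < i)%N -> (w i < w s)%N ->
      exists j' : 'I_n, (s <= j' < i)%N /\ (w j' + k <= w i)%N.
Proof.
move=> [[hij hmm hk hnu] hmax] s hsi hws.
case: (boolP [exists j' : 'I_n, (s <= j' < i) && (w j' + k <= w i)]) =>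
  [/existsP [j' /andP[h1 h2]]|hne]; first by exists j'.
exfalso; apply: hmax.
have hne' : forall m : 'I_n, (s <= m < i)%N -> (w i < w m + k)%N.
  by move=> m hm; move/existsPn: hne => /(_ m); rewrite hm /= -ltnNge.
pose P := fun p : 'I_n => (p < i) && (w i < w p).
have Ps : P s by rewrite /P hsi hws.
case: (arg_maxnP (fun p : 'I_n => nat_of_ord p) Ps) => s' /andP[hsi' hws'] hmax'.
have hs's : (s <= s')%N by apply: hmax'.
have hbet : forall m : 'I_n, (s' < m < i)%N -> (w m < w i)%N.
  move=> m /andP[h1 h2]; apply: wlt.
    by apply/eqP => e; rewrite e ltnn in h2.
  rewrite leqNgt; apply/negP => h.
  have := hmax' m; rewrite /P h2 h /= => /(_ isT); lia.
exists s', j; split; first lia; split => //; split.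
  by case=> e; move: hsi'; rewrite e ltnn.
split.
- lia.
- move=> m /andP[h1 h2]; case: (leqP i m) => hmi.
    by have := hmm m; rewrite h2 hmi => /(_ isT) [a b]; split; lia.
  case: (ltnP s' m) => hms.
    have := hbet m; rewrite hmi hms => /(_ isT) h.
    have := hne' m; rewrite hmi andbT => /(_ ltac:(lia)) h'.
    split; lia.
  have e : m = s' by apply: ordeq; lia.
  subst m. have := hmm i => /(_ ltac:(lia)) [a b]; split; lia.
- lia.
- move=> [a [b [ha [hb [hab hd]]]]].
  case: (leqP i a) => hia.
    by apply: hnu; exists a, b; do !split; lia.
  have := hne' a; rewrite hia andbT => /(_ ltac:(lia)) ha'.
  case: (leqP i b) => hib.
    have := hmm b; rewrite hib hb => /(_ isT) [_ ?]; lia.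
  have := hbet b; rewrite hib andbT => /(_ ltac:(lia)) ?; lia.
Qed.

Lemma asc_max (i : 'I_n) (C1 : forall s : 'I_n, (i < s)%N -> (w i < w s)%N ->
      exists j : 'I_n, (i < j <= s)%N /\ (w j + k <= w i)%N) :
  forall a : 'I_n, kascending w k a i -> exists a', max_kascending w k a' i.
Proof.
suff H : forall N (a : 'I_n), (a : nat) = N -> kascending w k a i ->
   exists a', max_kascending w k a' i by move=> a; exact: H.
elim/ltn_ind=> N IH a ha hasc.
have [hai0 hmm0 hk0 hnd0] := hasc.
case: (classic (exists i' j' : 'I_n, (i' <= a)%N /\ (i <= j')%N /\ (i', j') <> (a, i)
                          /\ kascending w k i' j')); last first.
  by move=> hno; exists a; split.
move=> [a' [b' [h1 [h2 [hne [hab hmm hk hnd]]]]]].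
have eb : b' = i.
  apply: ordeq; case: (ltnP i b') => hib; last lia.
  exfalso.
  have hwi : (w i < w b')%N.
    apply: wlt; first by apply/eqP => e; rewrite e ltnn in hib.
    have := hmm i; move=> /(_ ltac:(lia)) [_ ?]; done.
  have [j' [hj1 hj2]] := C1 b' hib hwi.
  apply: hnd; exists i, j'; do !split; lia.
subst b'.
have ha' : (a' < a)%N.
  case: (ltnP a' a) => // h; exfalso; apply: hne.
  have e : a' = a by apply: ordeq; lia.
  by rewrite e.
apply: (IH a' _ a'); [lia | done | by split].
Qed.

Lemma desc_max (i : 'I_n) (C2 : forall s : 'I_n, (s < i)%N -> (w i < w s)%N ->
      exists j : 'I_n, (s <= j < i)%N /\ (w j + k <= w i)%N) :
  forall b : 'I_n, kdescending w k i b -> exists b', max_kdescending w k i b'.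
Proof.
suff H : forall N (b : 'I_n), n - (b : nat) = N -> kdescending w k i b ->
   exists b', max_kdescending w k i b' by move=> b; exact: H.
elim/ltn_ind=> N IH b hb hdesc.
have [hai0 hmm0 hk0 hnd0] := hdesc.
case: (classic (exists i' j' : 'I_n, (i' <= i)%N /\ (b <= j')%N /\ (i', j') <> (i, b)
                          /\ kdescending w k i' j')); last first.
  by move=> hno; exists b; split.
move=> [a' [b' [h1 [h2 [hne [hab hmm hk hnu]]]]]].
have ea : a' = i.
  apply: ordeq; case: (ltnP a' i) => hai; last lia.
  exfalso.
  have hwi : (w i < w a')%N.
    apply: wlt; first by apply/eqP => e; rewrite e ltnn in hai.
    have := hmm i; move=> /(_ ltac:(lia)) [_ ?]; done.
  have [j' [hj1 hj2]] := C2 a' hai hwi.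
  apply: hnu; exists j', i; do !split; lia.
subst a'.
have hb' : (b < b')%N.
  case: (ltnP b b') => // h; exfalso; apply: hne.
  have e : b' = b by apply: ordeq; lia.
  by rewrite e.
apply: (IH (n - b') _ b'); [have := ltn_ord b'; lia | done | by split].
Qed.

End Aux.

Theorem proposition3p1 (n : nat) (hn : (2 <= n)%N) (w : 'S_n) (i : 'I_n)
    (k : nat) (hk : (1 <= k <= n - 1)%N) :
  kpeak w k i <->
  ((forall s : 'I_n, (i < s)%N -> (w i < w s)%N ->
      exists j : 'I_n, (i < j <= s)%N /\ (w j + k <= w i)%N) /\
   (forall s : 'I_n, (s < i)%N -> (w i < w s)%N ->
      exists j : 'I_n, (s <= j < i)%N /\ (w j + k <= w i)%N)).
Proof.
have hk1 : (0 < k)%N by lia.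
split.
  case=> [[j h]|[j h]]; split.
  - exact: (asc_c1 hk1 h).
  - exact (asc_c2 hk1 h).
  - exact (desc_c1 hk1 h).
  - exact (desc_c2 hk1 h).
move=> [C1 C2].
have hn1 : (n.-1 < n)%N by lia.
pose q := (w^-1)%g (Ordinal hn1).
have wq : (w q : nat) = n.-1 by rewrite /q permKV.
have hn0 : (0 < n)%N by lia.
pose p := (w^-1)%g (Ordinal hn0).
have wp : (w p : nat) = 0 by rewrite /p permKV.
have hki : (k <= w i)%N.
  case: (leqP k (w i)) => // hlt; exfalso.
  have hwq : (w i < w q)%N by rewrite wq; have := ltn_ord (w i); lia.
  case: (ltngtP i q) => hiq.
  - have [j [_ ?]] := C1 q hiq hwq; lia.
  - have [j [_ ?]] := C2 q hiq hwq; lia.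
  - have e : i = q by apply: ordeq.
    by move: hwq; rewrite e ltnn.
have hpk : (w p + k <= w i)%N by rewrite wp.
case: (ltngtP p i) => hpi.
- pose P := fun q : 'I_n => (q < i) && (w q + k <= w i).
  have Pp : P p by rewrite /P hpi hpk.
  case: (arg_maxnP (fun q : 'I_n => nat_of_ord q) Pp) => j0 /andP[hj0 hwj0] hmx.
  have bnd : forall m : 'I_n, (j0 < m <= i)%N -> (w i < w m + k)%N /\ (w m <= w i)%N.
    move=> m /andP[h1 h2].
    case: (ltnP m i) => h3; last first.
      have e : m = i by apply: ordeq; lia.
      by subst m; split; lia.
    split.
      rewrite ltnNge; apply/negP => h; have := hmx m; rewrite /P h3 h => /(_ isT); lia.
    rewrite leqNgt; apply/negP => h.
    have [j' [hj1 hj2]] := C2 m h3 h.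
    have := hmx j'; rewrite /P hj2 andbT => /(_ ltac:(lia)); lia.
  have hasc : kascending w k j0 i.
    split => //.
    + move=> m /andP[h1 h2]; case: (ltnP j0 m) => h3.
        have := bnd m; rewrite h3 h2 => /(_ isT); lia.
      have e : m = j0 by apply: ordeq; lia.
      by subst m; lia.
    + move=> [s [t [hs [ht [hst hd]]]]].
      have := bnd t; rewrite ht andbT => /(_ ltac:(lia)) [h1 h2].
      case: (ltnP j0 s) => h3.
        have := bnd s; rewrite h3 /= => /(_ ltac:(lia)) [h4 h5]; lia.
      have e : s = j0 by apply: ordeq; lia.
      subst s; lia.
  have [a' ha'] := asc_max hk1 C1 hasc.
  by left; exists a'.
- pose P := fun q : 'I_n => (i < q) && (w q + k <= w i).
  have Pp : P p by rewrite /P hpi hpk.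
  case: (arg_minnP (fun q : 'I_n => nat_of_ord q) Pp) => j0 /andP[hj0 hwj0] hmn.
  have bnd : forall m : 'I_n, (i <= m < j0)%N -> (w i < w m + k)%N /\ (w m <= w i)%N.
    move=> m /andP[h1 h2].
    case: (ltnP i m) => h3; last first.
      have e : m = i by apply: ordeq; lia.
      by subst m; split; lia.
    split.
      rewrite ltnNge; apply/negP => h; have := hmn m; rewrite /P h3 h => /(_ isT); lia.
    rewrite leqNgt; apply/negP => h.
    have [j' [hj1 hj2]] := C1 m h3 h.
    have := hmn j'; rewrite /P hj2 andbT => /(_ ltac:(lia)); lia.
  have hdesc : kdescending w k i j0.
    split => //.
    + move=> m /andP[h1 h2]; case: (ltnP m j0) => h3.
        have := bnd m; rewrite h3 h1 => /(_ isT); lia.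
      have e : m = j0 by apply: ordeq; lia.
      by subst m; lia.
    + move=> [s [t [hs [ht [hst hd]]]]].
      have := bnd s; rewrite hs /= => /(_ ltac:(lia)) [h1 h2].
      case: (ltnP t j0) => h3.
        have := bnd t; rewrite h3 andbT => /(_ ltac:(lia)) [h4 h5]; lia.
      have e : t = j0 by apply: ordeq; lia.
      subst t; lia.
  have [b' hb'] := desc_max hk1 C2 hdesc.
  by right; exists b'.
- have e : p = i by apply: ordeq.
  by move: hpk; rewrite e; lia.
Qed.
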